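(* Let $d,r:\mathbb{N}\to\mathbb{N}$ be functions such that $d$ is nondecreasing, takes only odd values at least $5$, and $d(n)\ge2r(n)+1$ for all $n$. Let $\alpha_n=(1\;2\;\cdots\;d(n))$, $\beta_n=(1\;(1+r(n))\;(1+2r(n)))\in\mathrm{Alt}(d(n))$, let $\alpha=(\alpha_n)_n,\beta=(\beta_n)_n\in\prod_n\mathrm{Alt}(d(n))$, $G=\langle\alpha,\beta\rangle$, let $\pi_n:\prod_k\mathrm{Alt}(d(k))\to\mathrm{Alt}(d(n))$ be the projection, and for $m\ge0$ let $L_m=\langle\alpha^j\beta\alpha^{-j}:|j|\le m\rangle\le G$. If $n$ is such that $\langle\alpha_n,\beta_n\rangle=\mathrm{Alt}(d(n))$, then $\pi_n(L_m)=\mathrm{Alt}(d(n))$ for all $m\ge d(n)\log d(n)/\log 2$.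
   Context: $\mathbb{N}=\{1,2,3,\dots\}$. *)

(* Defs.v *)
From Stdlib Require Import Rdefinitions Raxioms Rfunctions Rpower Lia.
From HB Require Import structures.
From mathcomp Require Import all_boot all_order all_algebra all_fingroup all_solvable.
From mathcomp Require Import zify.
Set Implicit Arguments. Unset Strict Implicit. Unset Printing Implicit Defensive.

(* Points 1..d of the paper are the ordinals 0..d-1 of 'I_d. *)

Definition alpha_perm (k : nat) : {perm 'I_k} := perm (@ordS_inj k).

Definition cyc3 (r i : nat) : nat :=
  if i == 0 then r else if i == r then (2 * r)%N
  else if i == (2 * r)%N then 0 else i.

Lemma cyc3K3 r : 0 < r -> forall i, cyc3 r (cyc3 r (cyc3 r i)) = i.
Proof.
move=> r0 i; rewrite /cyc3.
have r2 : (2 * r == r) = false by apply/eqP; lia.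
have r20 : (2 * r == 0) = false by apply/eqP; lia.
have rn0 : (r == 0) = false by apply/eqP; lia.
case: (eqVneq i 0) => [->|i0]; first by rewrite ?eqxx ?rn0 ?r20 ?r2 ?eqxx.
case: (eqVneq i r) => [->|ir]; first by rewrite ?eqxx ?rn0 ?r20 ?r2 ?eqxx.
case: (eqVneq i (2*r)) => [->|i2]; first by rewrite ?eqxx ?rn0 ?r20 ?r2 ?eqxx.
by rewrite !(negbTE i0, negbTE ir, negbTE i2).
Qed.

Definition beta_fun (k r : nat) (i : 'I_k) : 'I_k :=
  if (0 < r) && (2 * r < k) then insubd i (cyc3 r i) else i.

Lemma beta_fun_inj k r : injective (@beta_fun k r).
Proof.
move=> i j; rewrite /beta_fun; case: ifP => [/andP [r0 rk]|_] //.
have lt : forall x : 'I_k, cyc3 r x < k.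
  move=> x; rewrite /cyc3; case: ifP => _; first lia.
  case: ifP => _; first lia. case: ifP => _; first lia. exact: ltn_ord.
move/(congr1 val); rewrite !val_insubd !lt => e.
apply: val_inj => /=; by rewrite -(cyc3K3 r0 (val i)) e cyc3K3.
Qed.

Definition beta_perm (k r : nat) : {perm 'I_k} := perm (@beta_fun_inj k r).

Section Product.
Variable d : nat -> nat.

(* the full product  prod_n Sym(d n)  (which contains prod_n Alt(d n)),
   with pointwise group operations *)
Definition Prod := forall n, {perm 'I_(d n)}.
Definition pone : Prod := fun n => 1%g.
Definition pmul (x y : Prod) : Prod := fun n => (x n * y n)%g.
Definition pinv (x : Prod) : Prod := fun n => (x n)^-1%g.
Definition pexpn (x : Prod) (k : nat) : Prod := iter k (pmul x) pone.
Definition zpow (x : Prod) (j : int) : Prod :=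
  match j with Posz k => pexpn x k | Negz k => pinv (pexpn x k.+1) end.

Definition is_subgroup (H : Prod -> Prop) : Prop :=
  [/\ H pone, (forall x y, H x -> H y -> H (pmul x y)) & (forall x, H x -> H (pinv x))].

Definition gen (S : Prod -> Prop) : Prod -> Prop :=
  fun x => forall H, is_subgroup H -> (forall y, S y -> H y) -> H x.
End Product.

Definition alpha (d : nat -> nat) : Prod d := fun n => alpha_perm (d n).
Definition beta (d r : nat -> nat) : Prod d := fun n => beta_perm (d n) (r n).

Definition Lm (d r : nat -> nat) (m : nat) : Prod d -> Prop :=
  gen (fun y => exists j : int, (absz j <= m)%N /\
        y = pmul (pmul (zpow (alpha d) j) (beta d r)) (zpow (alpha d) (- j)%R)).

(* Main.v *)
Require Import Defs.
From Stdlib Require Import Reals Lra Lia Psatz.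
From Stdlib Require Import Rdefinitions Raxioms Rfunctions Rpower Lia.
From HB Require Import structures.
From mathcomp Require Import all_boot all_order all_algebra all_fingroup all_solvable.
From mathcomp Require Import zify.
Set Implicit Arguments. Unset Strict Implicit. Unset Printing Implicit Defensive.
Section Real.
Local Open Scope R_scope.
Lemma real_bound (k m : nat) : (5 <= k)%nat ->
  Rle (Rdiv (Rmult (INR k) (ln (INR k))) (ln (INR 2))) (INR m) -> (k <= m)%nat.
Proof.
intros hk hm.
assert (H2 : (0 < ln (INR 2))).
{ rewrite <- ln_1. apply ln_increasing; simpl; lra. }
assert (Hk : (INR 2 < INR k)) by (apply lt_INR; lia).
assert (Hl : (ln (INR 2) < ln (INR k))) by (apply ln_increasing; [simpl; lra | exact Hk]).
assert (E : (INR k * ln (INR k) = (INR k * ln (INR k) / ln (INR 2)) * ln (INR 2))) by (field; lra).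
assert (Hp : (0 <= INR k)) by apply pos_INR.
apply/leP; apply INR_le.
assert (INR k * ln (INR 2) <= INR m * ln (INR 2)).
{ apply Rle_trans with (INR k * ln (INR k)). apply Rmult_le_compat_l; [exact Hp | apply Rlt_le; exact Hl]. rewrite E. apply Rmult_le_compat_r; lra. }
apply Rmult_le_reg_r with (ln (INR 2)); assumption.
Qed.
End Real.

Lemma pexpnE d (x : Prod d) k n : pexpn x k n = (x n ^+ k)%g.
Proof. elim: k => [|k IH] //=; by rewrite /pmul IH expgS. Qed.

Lemma alpha_powE k j (i : 'I_k) : val ((alpha_perm k ^+ j)%g i) = (i + j) %% k.
Proof.
elim: j => [|j IH]; first by rewrite expg0 perm1 addn0 modn_small.
rewrite expgSr permM /alpha_perm permE /= IH.
case: k i IH => [[]//|k] i IH /=.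
by rewrite addnS -!addn1 modnDml addn1.
Qed.

Lemma alpha_ord k : ((alpha_perm k) ^+ k = 1)%g.
Proof.
apply/permP => i; apply: val_inj; rewrite alpha_powE perm1 modnDr modn_small //.
Qed.

Section S.
Variables (k r : nat) (hk : 5 <= k) (hr : 0 < r) (hkr : 2 * r + 1 <= k).
Local Open Scope group_scope.
Let a := alpha_perm k.
Let b := beta_perm k r.
Definition Aset : {set {perm 'I_k}} := [set (b ^ (a ^+ (val j)))%g | j : 'I_k].

Lemma b_neq1 : b != 1%g.
Proof.
have k0 : 0 < k by lia.
apply/eqP => /permP /(_ (Ordinal k0)) /(congr1 val).
rewrite perm1 /b /beta_perm permE /beta_fun /=.
have -> : (0 < r) && (2 * r < k) by apply/andP; split; lia.
rewrite val_insubd /cyc3 /=.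
have -> : r < k by lia.
lia.
Qed.

Lemma a_norm : a \in 'N(Aset).
Proof.
have k0 : 0 < k by lia.
rewrite inE; apply/subsetP => x /imsetP [c /imsetP [j _ ->] ->].
rewrite -conjgM -expgSr -(expg_mod _ (alpha_ord k)).
apply/imsetP; exists (Ordinal (ltn_pmod j.+1 k0)) => //.
Qed.

Lemma gen_Aset : <<[set a; b]>>%g = 'Alt_('I_k) -> <<Aset>>%g = 'Alt_('I_k).
Proof.
move=> hg.
have bA : b \in <<Aset>>%g.
  have k0 : 0 < k by lia.
  apply: mem_gen; apply/imsetP; exists (Ordinal k0) => //=; by rewrite expg0 conjg1.
have sub : <<Aset>>%g \subset 'Alt_('I_k).
  rewrite -hg gen_subG; apply/subsetP => x /imsetP [j _ ->].
  by rewrite groupJ ?groupX // mem_gen // !inE eqxx ?orbT.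
have nrm : <<Aset>>%G <| 'Alt_('I_k).
  rewrite /normal sub /= -hg gen_subG; apply/subsetP => x /set2P [] ->.
  - have : [set a] \subset 'N(<<Aset>>) by apply: norms_gen; rewrite sub1set a_norm.
    by rewrite sub1set.
  - by apply: (subsetP (normG _)).
have /simpleP [_ /(_ _ nrm)] := simple_Alt5 (T := 'I_k) ltac:(by rewrite card_ord).
case=> // /= h1.
move: bA; rewrite h1 inE => /eqP hb; by move: b_neq1; rewrite hb eqxx.
Qed.
End S.

Lemma gen_sub d (S : Prod d -> Prop) : is_subgroup (gen S).
Proof.
split.
- by move=> H [h1 _ _] _.
- move=> x y hx hy H hH hS; case: (hH) => _ hm _; apply: hm; [exact: hx | exact: hy].
- move=> x hx H hH hS; case: (hH) => _ _ hi; apply: hi; exact: hx.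
Qed.

Lemma zpowP d (x : Prod d) j n : zpow x (Posz j) n = (x n ^+ j)%g.
Proof. by rewrite /= pexpnE. Qed.

Lemma zpowN d (x : Prod d) j n : zpow x (- Posz j)%R n = (x n ^+ j)^-1%g.
Proof.
case: j => [|j]; first by rewrite GRing.oppr0 /= expg0 invg1.
by rewrite -NegzE /= /pinv /pmul pexpnE expgS.
Qed.

Lemma zpow_mem d (x : Prod d) J n (G : {group {perm 'I_(d n)}}) :
  x n \in G -> zpow x J n \in G.
Proof.
case: J => j xG; first by rewrite zpowP groupX.
by rewrite /zpow /pinv (pexpnE x j.+1 n) groupV groupX.
Qed.

Lemma lift_prod d r m n (hm : d n <= m) N (c : 'I_N -> {perm 'I_(d n)}) :
  (forall i, c i \in @Aset (d n) (r n)) ->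
  exists x : Prod d, @Lm d r m x /\ x n = (\prod_i c i)%g.
Proof.
elim: N c => [|N IH] c hc.
  exists (pone d); split; first by case: (gen_sub (d:=d) (fun y => exists j : int, (absz j <= m)%N /\
        y = pmul (pmul (zpow (alpha d) j) (beta d r)) (zpow (alpha d) (- j)%R))).
  by rewrite big_ord0.
have [x [hx ex]] := IH (fun i => c (lift ord0 i)) (fun i => hc _).
have /imsetP [j _ ej] := hc ord0.
pose g := pmul (pmul (zpow (alpha d) (- Posz j)%R) (beta d r)) (zpow (alpha d) (- (- Posz j))%R).
exists (pmul g x); split.
  case: (gen_sub (d:=d) (fun y => exists j : int, (absz j <= m)%N /\
        y = pmul (pmul (zpow (alpha d) j) (beta d r)) (zpow (alpha d) (- j)%R))) => _ hm' _.
  apply: hm' => //.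
  move=> H _ hS; apply: hS; exists (- Posz j)%R; split => //.
  rewrite abszN /=; have := ltn_ord j; lia.
rewrite big_ord_recl /pmul ex /g /pmul GRing.opprK zpowN zpowP ej.
by rewrite /conjg /alpha /beta !mulgA.
Qed.

Theorem lemma3p3' (d r : nat -> nat)
  (d_ge5 : forall n, (5 <= d n)%N)
  (r_pos : forall n, (0 < r n)%N)
  (d_ge_r : forall n, (2 * r n + 1 <= d n)%N)
  (n : nat)
  (hgen : <<[set alpha d n; beta d r n]>>%g = Alt 'I_(d n))
  (m : nat) (hm : d n <= m) :
  forall y : {perm 'I_(d n)},
    y \in Alt 'I_(d n) <-> exists x : Prod d, @Lm d r m x /\ x n = y.
Proof.
move=> y; split.
  rewrite -(gen_Aset (d_ge5 n) (r_pos n) (d_ge_r n) hgen) => /gen_prodgP [N [c hc ->]].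
  exact: lift_prod.
move=> [x [hx <-]].
have aA : alpha d n \in Alt 'I_(d n) by rewrite -hgen mem_gen // !inE eqxx.
have bA : beta d r n \in Alt 'I_(d n) by rewrite -hgen mem_gen // !inE eqxx orbT.
apply: (hx (fun x : Prod d => x n \in Alt 'I_(d n))).
- split => [|u v hu hv|u hu]; rewrite /pone /pmul /pinv ?group1 ?groupM ?groupV //.
- move=> z [J [_ ->]]; rewrite /pmul !groupM //; exact: zpow_mem.
Qed.
Theorem lemma3p3 (d r : nat -> nat)
  (d_mono : forall a b, (a <= b)%N -> (d a <= d b)%N)
  (d_odd : forall n, odd (d n))
  (d_ge5 : forall n, (5 <= d n)%N)
  (r_pos : forall n, (0 < r n)%N)
  (d_ge_r : forall n, (2 * r n + 1 <= d n)%N)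
  (n : nat)
  (hgen : <<[set alpha d n; beta d r n]>>%g = Alt 'I_(d n))
  (m : nat)
  (hm : Rle (Rdiv (Rmult (INR (d n)) (ln (INR (d n)))) (ln (INR 2))) (INR m)) :
  forall y : {perm 'I_(d n)},
    y \in Alt 'I_(d n) <-> exists x : Prod d, @Lm d r m x /\ x n = y.
Proof.
apply: lemma3p3' => //.
exact: real_bound (d_ge5 n) hm.
Qed.
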